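(* Let $S\subseteq\mathbb{N}^k$ be a slice and let $\mathbf{u},\mathbf{v}\in S$. If $\mathbf{u}\le\mathbf{v}$ and $M_{\mathbf{u}}=M_{\mathbf{v}}$, then $\mathbf{v}+M_{\mathbf{v}}\subseteq\mathbf{u}+M_{\mathbf{u}}$.
   Context: $\le$ is the componentwise order on $\mathbb{N}^k$; for $X\subseteq\mathbb{N}^k$, $\min X$ is the (finite) set of its minimal elements and $X^*$ the submonoid generated by $X$. A slice is a set $S\subseteq\mathbb{N}^k$ such that whenever $\mathbf{u},\mathbf{u}+\mathbf{v},\mathbf{u}+\mathbf{w}\in S$ for $\mathbf{u},\mathbf{v},\mathbf{w}\in\mathbb{N}^k$, then $\mathbf{u}+\mathbf{v}+\mathbf{w}\in S$. For $\mathbf{u}\in S$ let $S-\mathbf{u}=\{\mathbf{v}\in\mathbb{N}^k\mid\mathbf{u}+\mathbf{v}\in S\}$ and $M_{\mathbf{u}}=(\min((S-\mathbf{u})\setminus\{\mathbf{0}\}))^*$. *)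

(* Defs.v *)
From mathcomp Require Import all_boot.
Set Implicit Arguments. Unset Strict Implicit. Unset Printing Implicit Defensive.

Definition vec (k : nat) := {ffun 'I_k -> nat}.

Definition vzero k : vec k := [ffun => 0].
Definition vadd k (u v : vec k) : vec k := [ffun i => u i + v i].

Definition vle k (u v : vec k) : Prop := forall i, u i <= v i.

Definition is_slice k (S : vec k -> Prop) : Prop :=
  forall u v w : vec k, S u -> S (vadd u v) -> S (vadd u w) ->
    S (vadd (vadd u v) w).

Definition shift k (S : vec k -> Prop) (u : vec k) : vec k -> Prop :=
  fun v => S (vadd u v).

Definition minset k (X : vec k -> Prop) : vec k -> Prop :=
  fun x => X x /\ forall y, X y -> vle y x -> y = x.

Inductive gen k (X : vec k -> Prop) : vec k -> Prop :=
| gen0 : gen X (vzero k)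
| genS a b : X a -> gen X b -> gen X (vadd a b).

Definition Mset k (S : vec k -> Prop) (u : vec k) : vec k -> Prop :=
  gen (minset (fun v => shift S u v /\ v <> vzero k)).

(* Main.v *)
Require Import Defs.
From mathcomp Require Import all_boot.
From Stdlib Require Import Classical.
From mathcomp Require Import zify.

Section Aux.
Context {k : nat}.
Implicit Types (S X Y : vec k -> Prop) (u v w a b : vec k).

Lemma vaddA a b w : vadd (vadd a b) w = vadd a (vadd b w).
Proof. by apply/ffunP=> i; rewrite !ffunE addnA. Qed.
Lemma vaddC a b : vadd a b = vadd b a.
Proof. by apply/ffunP=> i; rewrite !ffunE addnC. Qed.
Lemma vadd0 a : vadd a (vzero k) = a.
Proof. by apply/ffunP=> i; rewrite !ffunE addn0. Qed.

Definition vsum w := (\sum_i w i)%N.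

Lemma vsum_add a b : vsum (vadd a b) = (vsum a + vsum b)%N.
Proof. rewrite /vsum -big_split /=; apply: eq_bigr => i _; by rewrite ffunE. Qed.

Lemma vsum_pos {a} : a <> vzero k -> 0 < vsum a.
Proof.
move=> H; rewrite lt0n; apply/negP => /eqP E.
apply: H; apply/ffunP => i; rewrite ffunE.
by move/eqP: E; rewrite /vsum sum_nat_eq0 => /forallP/(_ i)/eqP.
Qed.

Lemma vle_split {a b} : vle a b -> exists c, b = vadd a c.
Proof.
move=> H; exists [ffun i => b i - a i]; apply/ffunP => i.
by rewrite !ffunE subnKC.
Qed.

Lemma min_below {X x} : X x -> exists m, Defs.minset X m /\ vle m x.
Proof.
move: x; suff: forall n x, vsum x < n -> X x -> exists m, Defs.minset X m /\ vle m x.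
  by move=> H x; apply: (H (vsum x).+1).
elim=> [//|n IH] x Hx Xx.
case: (classic (Defs.minset X x)) => [Hm|Hm].
  by exists x; split=> // i.
have [y [Xy [Hyx Hne]]] : exists y, X y /\ vle y x /\ y <> x.
  apply: NNPP => N; apply: Hm; split=> // y Xy Hyx.
  apply: NNPP => Hne; apply: N; by exists y.
have [c Ec] := vle_split Hyx.
have Hc : c <> vzero k by move=> Ec0; apply: Hne; rewrite Ec Ec0 vadd0.
have Hs : vsum y < n.
  have := vsum_pos Hc; move: Hx; rewrite Ec vsum_add. lia.
have [m [Hm1 Hm2]] := IH y Hs Xy.
by exists m; split=> // i; apply: leq_trans (Hm2 i) (Hyx i).
Qed.

Definition Aset S u := Defs.minset (fun z => shift S u z /\ z <> vzero k).

Lemma shift0 S u : S u -> shift S u (vzero k).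
Proof. by rewrite /shift vadd0. Qed.

Lemma shift_add {S u a b} : is_slice S -> S u -> shift S u a -> shift S u b ->
  shift S u (vadd a b).
Proof. move=> Hs Su Ha Hb; rewrite /shift -vaddA; exact: Hs. Qed.

Lemma gen_add {X a b} : gen X a -> gen X b -> gen X (vadd a b).
Proof.
elim=> [|c d Xc _ IH] Hb; first by rewrite vaddC vadd0.
rewrite vaddA; constructor => //; exact: IH.
Qed.

Lemma gen_sub {S u x} : is_slice S -> S u -> gen (Aset S u) x -> shift S u x.
Proof.
move=> Hs Su; elim=> [|a b [[Ha _] _] _ IH]; first exact: shift0.
exact: shift_add.
Qed.

Lemma gen_dec {X x} : gen X x -> x <> vzero k -> exists a c, X a /\ gen X c /\ x = vadd a c.
Proof. case=> [//|a c Xa Gc] _; by exists a, c. Qed.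

Lemma vle_add a c : vle a (vadd a c).
Proof. by move=> i; rewrite ffunE leq_addr. Qed.

Lemma eqA {S u v} : is_slice S -> S u -> S v ->
  (forall z, shift S u z -> shift S v z) ->
  (forall x, gen (Aset S u) x <-> gen (Aset S v) x) ->
  forall x, Aset S u x <-> Aset S v x.
Proof.
move=> Hs Su Sv Huv HM x; split => Hx.
- have Gx : gen (Aset S v) x.
    apply/HM; rewrite -[x]vadd0; constructor => //; constructor.
  have [[Tx Nx] Mx] := Hx.
  have [b [c [Ab [Gc E]]]] := gen_dec Gx Nx.
  have Gb : gen (Aset S u) b.
    apply/HM; rewrite -[b]vadd0; constructor => //; constructor.
  have Tb := gen_sub Hs Su Gb.
  have Eb : b = x.
    apply: Mx; first by split=> //; case: Ab => [[]].
    by rewrite E; apply: vle_add.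
  by rewrite -Eb.
- have Gx : gen (Aset S u) x.
    apply/HM; rewrite -[x]vadd0; constructor => //; constructor.
  have [[Tx Nx] Mx] := Hx.
  have [b [c [Ab [Gc E]]]] := gen_dec Gx Nx.
  have [[Tb Nb] _] := Ab.
  have Eb : b = x.
    apply: Mx; first by split=> //; apply: Huv.
    by rewrite E; apply: vle_add.
  by rewrite -Eb.
Qed.

Lemma sandwich S u v (Y : vec k -> Prop) :
  (forall z, shift S u z -> Y z) -> (forall z, Y z -> shift S v z) ->
  (forall x, Aset S u x <-> Aset S v x) ->
  forall x, Defs.minset (fun z => Y z /\ z <> vzero k) x <-> Aset S v x.
Proof.
move=> H1 H2 HA x; split.
- move=> [[Yx Nx] Mx]; split; first by split=> //; apply: H2.
  move=> y [Ty Ny] Hyx.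
  have [m [Am Hm]] := min_below (X := fun z => shift S v z /\ z <> vzero k) (conj Ty Ny).
  have Am' := Am; move/HA: Am' => [[Tm Nm] _].
  have Emx : m = x.
    apply: Mx; first by split=> //; apply: H1.
    by move=> i; apply: leq_trans (Hm i) (Hyx i).
  apply/ffunP => i; apply/anti_leq; rewrite Hyx /=.
  by have := Hm i; rewrite Emx.
- move=> Ax; have Ax' := Ax; move/HA: Ax' => [[Tx Nx] _].
  have [[Tvx _] Mv] := Ax.
  split; first by split=> //; apply: H1.
  move=> y [Yy Ny] Hyx; apply: Mv => //; split=> //; exact: H2.
Qed.

Lemma main {S v} : is_slice S -> S v ->
  forall n w u, vsum w < n -> S u -> v = vadd u w ->
  (forall x, Aset S u x <-> Aset S v x) -> gen (Aset S v) w.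
Proof.
move=> Hs Sv; elim=> [//|n IH] w u Hw Su Ev HA.
case: (classic (w = vzero k)) => [->|Nw]; first by constructor.
have Tw : shift S u w by rewrite /shift -Ev.
have [a [Aa Haw]] := min_below (X := fun z => shift S u z /\ z <> vzero k) (conj Tw Nw).
have [w' Ew] := vle_split Haw.
have [[Ta Na] _] := Aa.
have Su' : S (vadd u a) := Ta.
have Ev' : v = vadd (vadd u a) w' by rewrite vaddA -Ew.
have HA' : forall x, Aset S (vadd u a) x <-> Aset S v x.
  apply: (@sandwich S u v) => //.
  - move=> z Tz; rewrite /shift; apply: Hs => //.
  - move=> z Tz; rewrite /shift Ev'; apply: Hs => //; by rewrite -Ev'.
have Hw' : vsum w' < n.
  move: Hw; have := vsum_pos Na; rewrite Ew vsum_add; lia.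
have G := IH w' (vadd u a) Hw' Su' Ev' HA'.
rewrite Ew; constructor => //; exact/HA.
Qed.

End Aux.

Theorem lemma5 (k : nat) (S : vec k -> Prop) (u v : vec k) :
  is_slice S -> S u -> S v -> vle u v ->
  (forall x, Mset S u x <-> Mset S v x) ->
  forall x, Mset S v x -> exists y, Mset S u y /\ vadd v x = vadd u y.
Proof.
move=> Hs Su Sv Huv HM x Hx.
have [w Ew] := vle_split Huv.
have Huv' : forall z, shift S u z -> shift S v z.
  move=> z Tz; rewrite /shift Ew; apply: Hs => //; by rewrite -Ew.
have HA := eqA Hs Su Sv Huv' HM.
have Gw := main Hs Sv (vsum w).+1 w u (ltnSn _) Su Ew HA.
exists (vadd w x); split.
  apply/HM; exact: gen_add.
by rewrite Ew vaddA.
Qed.
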